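(* Let $N \ge 1$, $\tau > 0$, $\beta > 0$, $\eta > 0$, and let $I_1, \dots, I_N > 0$. Consider the dynamical system in the variables $R_1,\dots,R_N, G$: \[ \tau \frac{dR_i}{dt} = -R_i + \frac{\beta R_i + I_i}{\eta + G}, \quad i = 1,\dots,N, \qquad \tau \frac{dG}{dt} = -G + \sum_{j=1}^N R_j . \] Let $T = \sum_{j=1}^N I_j$ and define \[ G^* = \frac{(\beta - \eta) + \sqrt{(\eta-\beta)^2 + 4T}}{2}, \qquad R_i^* = \frac{I_i}{\eta - \beta + G^*}, \quad i=1,\dots,N. \] Then $(R_1^*,\dots,R_N^*,G^* )$ is the unique steady state of the system with $G^*>0$, and it is an attractor: every eigenvalue of the Jacobian of the system at this steady state has strictly negative real part, so the steady state is locally asymptotically stable.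
   Context: Here $R_i$ are firing rates of excitatory units, $G$ is the activity of a single inhibitory pool, $I_i$ are external inputs, $\beta$ is the self-excitation strength, $\eta$ is a semi-saturation constant and $\tau$ is a time constant. A steady state is a point where all time derivatives vanish. *)

(* Defs.v *)
From HB Require Import structures.
From mathcomp Require Import all_boot all_order all_algebra.
From mathcomp Require Import all_classical all_reals all_analysis.
From mathcomp Require complex.
Import complex.ComplexField.
Set Implicit Arguments. Unset Strict Implicit. Unset Printing Implicit Defensive.
Import Order.TTheory GRing.Theory Num.Theory.
Local Open Scope ring_scope.

(* State vector x : 'rV[R]_(N.+1).  Coordinate (lift ord_max i), i : 'I_N,
   is R_i ; coordinate ord_max is G. *)
Definition Rc (R : realType) (N : nat) (x : 'rV[R]_(N.+1)) (i : 'I_N) : R :=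
  x 0 (lift ord_max i).
Definition Gc (R : realType) (N : nat) (x : 'rV[R]_(N.+1)) : R := x 0 ord_max.

Definition field (R : realType) (N : nat) (tau beta eta : R) (I : 'I_N -> R)
    (x : 'rV[R]_(N.+1)) : 'rV[R]_(N.+1) :=
  \row_(k < N.+1)
    match unlift ord_max k with
    | Some i => (- Rc x i + (beta * Rc x i + I i) / (eta + Gc x)) / tau
    | None => (- Gc x + \sum_(j < N) Rc x j) / tau
    end.

Definition steady_state (R : realType) (N : nat) (tau beta eta : R)
    (I : 'I_N -> R) (x : 'rV[R]_(N.+1)) : Prop :=
  field tau beta eta I x = 0.

Definition Gstar (R : realType) (N : nat) (beta eta : R) (I : 'I_N -> R) : R :=
  ((beta - eta) + Num.sqrt ((eta - beta) ^+ 2 + 4 * \sum_(j < N) I j)) / 2.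

Definition xstar (R : realType) (N : nat) (beta eta : R) (I : 'I_N -> R)
    : 'rV[R]_(N.+1) :=
  \row_(k < N.+1)
    match unlift ord_max k with
    | Some i => I i / (eta - beta + Gstar beta eta I)
    | None => Gstar beta eta I
    end.

Definition complex_eigenvalue (R : realType) (n : nat) (A : 'M[R]_n)
    (lam : complex.complex R) : bool :=
  eigenvalue (map_mx (fun r : R => complex.Complex r 0) A) lam.

(* Main.v *)
Require Import Defs.
From HB Require Import structures.
From mathcomp Require Import all_boot all_order all_algebra.
From mathcomp Require Import all_classical all_reals all_analysis.
From mathcomp Require Import ring lra.
From mathcomp Require complex.
Import complex.ComplexField.
Import Order.TTheory GRing.Theory Num.Theory.
Import numFieldNormedType.Exports.
Local Open Scope ring_scope.

Section Helpers.
Variable R : realType.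

Lemma is_diff_coord n m (a : 'M[R]_(n, m)) (i : 'I_n) (j : 'I_m) :
  is_diff a (fun y : 'M[R]_(n, m) => y i j) (fun y => y i j).
Proof.
have @f : {linear 'M[R]_(n, m) -> R}.
  by exists (fun N : 'M[R]_(_, _) => N i j); do 2![eexists]; do ?[constructor];
     rewrite ?mxE// => ? *; rewrite ?mxE//; move=> ?; rewrite !mxE.
rewrite (_ : (fun _ => _) = f) //.
apply: DiffDef; first exact/linear_differentiable/coord_continuous.
by rewrite diff_lin //; apply: coord_continuous.
Qed.

Lemma row_differentiable (V : normedModType R) m (f : V -> 'rV[R]_m) a :
  (forall k, differentiable (fun y => f y 0 k) a) -> differentiable f a.
Proof.
move=> H.
have -> : f = \sum_(k < m) (fun y => f y 0 k *: delta_mx 0 k).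
  apply/funext => y; rewrite fct_sumE; exact: row_sum_delta.
apply: differentiable_sum => k; exact: differentiableZl.
Qed.

Lemma row_diff_coord (V : normedModType R) m (f : V -> 'rV[R]_m) a v k :
  differentiable f a -> ('d f a v) 0 k = 'd (fun y => f y 0 k) a v.
Proof.
move=> df.
have -> : (fun y => f y 0 k) = (fun z : 'rV[R]_m => z 0 k) \o f by [].
have [H _] := @is_diff_coord 1 m (f a) 0 k.
rewrite (diff_comp df H) /=.
by rewrite (@diff_val _ _ _ _ _ _ _ (@is_diff_coord 1 m (f a) 0 k)).
Qed.

End Helpers.


Section S.
Variable R : realType.

Lemma is_diff_inv (V : normedModType R) (f df : V -> R) a :
  is_diff a f df -> f a != 0 -> is_diff a (fun y => (f y)^-1) (- (f a) ^- 2 *: df).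
Proof.
move=> H fa0; apply: DiffDef; first exact: differentiableV.
by rewrite diffV // diff_val.
Qed.

Variables (N : nat) (tau beta eta : R) (I : 'I_N -> R).

Lemma compR_diff (a : 'rV[R]_(N.+1)) (i : 'I_N) : eta + a 0 ord_max != 0 ->
  differentiable (fun y => field tau beta eta I y 0 (lift ord_max i)) a /\
  forall v, 'd (fun y => field tau beta eta I y 0 (lift ord_max i)) a v =
   (- v 0 (lift ord_max i) + beta * v 0 (lift ord_max i) / (eta + a 0 ord_max)
    - (beta * a 0 (lift ord_max i) + I i) * v 0 ord_max / (eta + a 0 ord_max) ^+ 2) / tau.
Proof.
move=> Ha.
set c := (fun y : 'rV[R]_(N.+1) => y 0 (lift ord_max i)).
set cG := (fun y : 'rV[R]_(N.+1) => y 0 ord_max).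
have E : (fun y => field tau beta eta I y 0 (lift ord_max i)) =
   tau^-1 *: (- c + (beta *: c + cst (I i)) * (fun y => ((cst eta + cG) y)^-1)).
  apply/funext => y; rewrite /field mxE liftK /Rc /Gc /c /cG /=.
  by rewrite mulrC.
have Hc : is_diff a c c by exact: is_diff_coord.
have HG : is_diff a cG cG by exact: is_diff_coord.
have Hinv := is_diff_inv _ _ _ _ (is_diffD (is_diff_cst eta a) HG) Ha.
have D := is_diffZ tau^-1 (is_diffD (is_diffN Hc) (is_diffM (is_diffD (is_diffZ beta Hc) (is_diff_cst (I i) a)) Hinv)).
rewrite E; split; first exact: ex_diff.
move=> v; rewrite diff_val /=.
rewrite /c /cG /cst !fctE /=.
have -> : (0 : _ -> R) v = 0 by [].
rewrite /GRing.scale /=. ring.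
Qed.

Lemma is_diff_sum (V W : normedModType R) n (F dF : 'I_n -> V -> W) a :
  (forall i, is_diff a (F i) (dF i)) -> is_diff a (\sum_(i < n) F i) (\sum_(i < n) dF i).
Proof.
move=> H; elim/big_rec2: _ => [|i y1 y2 _ Hy]; first exact: is_diff_cst.
exact: is_diffD.
Qed.

Lemma compG_diff (a : 'rV[R]_(N.+1)) :
  differentiable (fun y => field tau beta eta I y 0 ord_max) a /\
  forall v, 'd (fun y => field tau beta eta I y 0 ord_max) a v =
   (- v 0 ord_max + \sum_(j < N) v 0 (lift ord_max j)) / tau.
Proof.
set cG := (fun y : 'rV[R]_(N.+1) => y 0 ord_max).
have E : (fun y => field tau beta eta I y 0 ord_max) =
   tau^-1 *: (- cG + \sum_(j < N) (fun y : 'rV[R]_(N.+1) => y 0 (lift ord_max j))).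
  apply/funext => y; rewrite /field mxE unlift_none /Rc /Gc /cG /= fct_sumE.
  by rewrite mulrC.
have HG : is_diff a cG cG by exact: is_diff_coord.
have HS := is_diff_sum _ _ _ _ _ _ (fun j : 'I_N => @is_diff_coord R 1 N.+1 a 0 (lift ord_max j)).
have D := is_diffZ tau^-1 (is_diffD (is_diffN HG) HS).
rewrite E; split; first exact: ex_diff.
move=> v; rewrite diff_val /= /cG !fctE /= fct_sumE.
rewrite /GRing.scale /=. ring.
Qed.

End S.


Section C.
Variable R : realType.
Local Notation C := (complex.complex R).
Local Notation Cx := complex.Complex.

Lemma sum_complex n (z : 'I_n -> C) :
  \sum_(j < n) z j = Cx (\sum_(j < n) complex.Re (z j)) (\sum_(j < n) complex.Im (z j)).
Proof.
elim/big_rec3: _ => [//|j x y w _ ->].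
by case: (z j).
Qed.

Lemma mulmx_mapC n m (v : 'rV[C]_n) (M : 'M[R]_(n, m)) k :
  (v *m map_mx (fun r : R => Cx r 0) M) 0 k =
  Cx ((map_mx (@complex.Re R) v *m M) 0 k) ((map_mx (@complex.Im R) v *m M) 0 k).
Proof.
rewrite !mxE sum_complex; congr Cx; apply: eq_bigr => j _; rewrite !mxE;
  case: (v 0 j) => a b /=; ring.
Qed.

End C.


Lemma complex_ext (R : realType) (z w : complex.complex R) :
  complex.Re z = complex.Re w -> complex.Im z = complex.Im w -> z = w.
Proof. by case: z; case: w => ? ? ? ? /= -> ->. Qed.

Theorem theorem2 (R : realType) (N : nat) (tau beta eta : R) (I : 'I_N -> R) :
  (1 <= N)%N -> 0 < tau -> 0 < beta -> 0 < eta -> (forall i, 0 < I i) ->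
  [/\ steady_state tau beta eta I (xstar beta eta I),
      0 < Gc (xstar beta eta I),
      (forall x : 'rV[R]_(N.+1),
          steady_state tau beta eta I x -> 0 < Gc x -> x = xstar beta eta I)
    & (forall lam : complex.complex R,
          complex_eigenvalue ('J (field tau beta eta I) (xstar beta eta I)) lam ->
          complex.Re lam < 0)].
Proof.
move=> N1 tau0 beta0 eta0 I0.
set T := \sum_(j < N) I j.
have T0 : 0 < T.
  case: N I I0 N1 @T => [//|N'] I' I0' _ /=.
  rewrite big_ord_recl; apply: ltr_pwDl; first exact: I0'.
  by apply: sumr_ge0 => j _; apply: ltW.
set s := Num.sqrt ((eta - beta) ^+ 2 + 4 * T).
have s0 : 0 <= s by apply: sqrtr_ge0.
have s2 : s ^+ 2 = (eta - beta) ^+ 2 + 4 * T.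
  by rewrite sqr_sqrtr // addr_ge0 ?sqr_ge0 // mulr_ge0 // ltW.
have sgt1 : eta - beta < s by nra.
have sgt2 : beta - eta < s by nra.
have GsE : Gstar beta eta I = (beta - eta + s) / 2 by [].
set Gs := Gstar beta eta I in GsE *.
set den := eta - beta + Gs.
have Gs0 : 0 < Gs by rewrite GsE; lra.
have den0 : 0 < den by rewrite /den GsE; lra.
have key : Gs * den = T.
  have -> : Gs * den = (s ^+ 2 - (eta - beta) ^+ 2) / 4 by rewrite /den GsE; field.
  by rewrite s2; field.
have Dd0 : 0 < eta + Gs by lra.
have xsR : forall i, xstar beta eta I 0 (lift ord_max i) = I i / den.
  by move=> i; rewrite mxE liftK.
have xsG : xstar beta eta I 0 ord_max = Gs.
  by rewrite mxE unlift_none.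
set xs := xstar beta eta I in xsR xsG *.
have tau_neq0 : tau != 0 by rewrite gt_eqF.
have den_neq0 : den != 0 by rewrite gt_eqF.
have Dd_neq0 : eta + Gs != 0 by rewrite gt_eqF.
split.
- apply/rowP => k; rewrite !mxE; case: unliftP => [i _|_].
    rewrite /Rc /Gc xsR xsG.
    have -> : eta + Gs = den + beta by rewrite /den; ring.
    have db : den + beta != 0 by rewrite gt_eqF //; lra.
    by field; rewrite tau_neq0 db den_neq0.
  rewrite /Rc /Gc xsG.
  under eq_bigr do rewrite xsR.
  by rewrite -mulr_suml -/T -key; field; rewrite tau_neq0 den_neq0.
- by rewrite /Gc xsG.
- move=> x; rewrite /steady_state => /rowP Hx Gx.
  have EG : eta + Gc x != 0 by rewrite gt_eqF //; lra.
  have Ri : forall i, Rc x i * (eta - beta + Gc x) = I i.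
    move=> i; have := Hx (lift ord_max i); rewrite !mxE liftK.
    move=> /eqP; rewrite mulf_eq0 invr_eq0 (negbTE tau_neq0) orbF => /eqP h.
    have := congr1 (fun t => t * (eta + Gc x)) h; rewrite /= mulrDl divfK // mul0r => h2.
    apply/eqP; rewrite -subr_eq0; apply/eqP; rewrite -[RHS]oppr0 -h2; ring.
  have HG : Gc x = \sum_(j < N) Rc x j.
    have := Hx ord_max; rewrite !mxE unlift_none.
    move=> /eqP; rewrite mulf_eq0 invr_eq0 (negbTE tau_neq0) orbF addrC subr_eq0.
    by move=> /eqP.
  have GT : Gc x * (eta - beta + Gc x) = T.
    by rewrite {1}HG mulr_suml; apply: eq_bigr => j _; exact: Ri.
  have GGs : Gc x = Gs.
    have : (Gc x - Gs) * (Gc x + den) = 0.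
      have -> : (Gc x - Gs) * (Gc x + den) = Gc x * (eta - beta + Gc x) - Gs * den.
        by rewrite /den; ring.
      by rewrite GT key subrr.
    move/eqP; rewrite mulf_eq0 subr_eq0 => /orP[/eqP // | /eqP h]; lra.
  apply/rowP => k; case: (unliftP ord_max k) => [i ->|->].
    rewrite xsR -(Ri i) GGs -/den mulfK //.
  by rewrite xsG; exact: GGs.
- move=> [x y] /eigenvalueP [v Hv vn0] /=.
  set J := 'J (field tau beta eta I) xs in Hv.
  have HDd : eta + xs 0 ord_max != 0 by rewrite xsG.
  have dF : differentiable (field tau beta eta I) xs.
    apply: row_differentiable => k; case: (unliftP ord_max k) => [i ->|->].
      exact: (@compR_diff R N tau beta eta I xs i HDd).1.
    exact: (@compG_diff R N tau beta eta I xs).1.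
  have Jent : forall (w : 'rV[R]_(N.+1)) k,
      (w *m J) 0 k = 'd (fun y => field tau beta eta I y 0 k) xs w.
    by move=> w k; rewrite /J -deriveEjacobian // deriveE // row_diff_coord.
  have Hk : forall k, complex.Complex x y * v 0 k =
      complex.Complex ((map_mx (@complex.Re R) v *m J) 0 k)
                      ((map_mx (@complex.Im R) v *m J) 0 k).
    move=> k; have := congr1 (fun M : 'M[complex.complex R]_(1, N.+1) => M 0 k) Hv; rewrite /= mulmx_mapC => ->.
    by rewrite mxE.
  set Dd := eta + Gs.
  have DdN : Dd != 0 := Dd_neq0.
  set al := beta / Dd - 1.
  set rho := fun i => (beta * (I i / den) + I i) / Dd ^+ 2.
  have E1 : forall i, complex.Complex (tau * x) (tau * y) * v 0 (lift ord_max i) =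
     complex.Complex al 0 * v 0 (lift ord_max i) - complex.Complex (rho i) 0 * v 0 ord_max.
    move=> i; have := Hk (lift ord_max i).
    rewrite !Jent !(proj2 (@compR_diff R N tau beta eta I xs i HDd)) xsR xsG !mxE -/Dd.
    case: (v 0 (lift ord_max i)) => a b; case: (v 0 ord_max) => c d /= [e1 e2].
    apply: complex_ext => /=.
      transitivity (tau * (x * a - y * b)); first by ring.
      by rewrite e1 /al /rho; field; rewrite DdN den_neq0 tau_neq0.
    transitivity (tau * (x * b + y * a)); first by ring.
    by rewrite e2 /al /rho; field; rewrite DdN den_neq0 tau_neq0.
  have E2 : complex.Complex (tau * x) (tau * y) * v 0 ord_max =
     - v 0 ord_max + \sum_(j < N) v 0 (lift ord_max j).
    have := Hk ord_max.
    rewrite !Jent !(proj2 (@compG_diff R N tau beta eta I xs)) !mxE.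
    rewrite sum_complex.
    case: (v 0 ord_max) => c d /= [e1 e2].
    rewrite (eq_bigr (fun j => complex.Re (v 0 (lift ord_max j)))) in e1; last by move=> j _; rewrite mxE.
    rewrite (eq_bigr (fun j => complex.Im (v 0 (lift ord_max j)))) in e2; last by move=> j _; rewrite mxE.
    apply: complex_ext => /=.
      transitivity (tau * (x * c - y * d)); first by ring.
      by rewrite e1; field; rewrite tau_neq0.
    transitivity (tau * (x * d + y * c)); first by ring.
    by rewrite e2; field; rewrite tau_neq0.
  suff : tau * x < 0 by rewrite pmulr_rlt0.
  have al0 : al < 0.
    by rewrite /al subr_lt0 ltr_pdivrMr // mul1r /Dd; lra.
  have rho0 : forall i, 0 <= rho i.
    move=> i; rewrite /rho; apply: divr_ge0; last exact: sqr_ge0.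
    apply: addr_ge0; last exact: ltW.
    by apply: mulr_ge0; [exact: ltW | apply: divr_ge0; apply: ltW].
  set P := \sum_(i < N) rho i.
  have P0 : 0 <= P by apply: sumr_ge0 => i _.
  set mu := complex.Complex (tau * x) (tau * y) in E1 E2 *.
  set alC := complex.Complex al 0 in E1.
  case: (eqVneq (v 0 ord_max) 0) => [g0 | gn0].
  - case: (pickP (fun k => v 0 k != 0)) => [k vk | H]; last first.
      exfalso; move/negP: vn0; apply; apply/eqP/rowP => k; rewrite mxE.
      by have := H k => /= /negbFE/eqP.
    case: (unliftP ord_max k) vk => [i -> | ->] vk; last by rewrite g0 eqxx in vk.
    have : mu * v 0 (lift ord_max i) = alC * v 0 (lift ord_max i).
      by rewrite E1 g0 mulr0 subr0.
    move/(mulIf vk) => /(congr1 (@complex.Re R)) /= ->.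
    exact: al0.
  - set S := \sum_(j < N) v 0 (lift ord_max j) in E2.
    have S1 : mu * S = alC * S - complex.Complex P 0 * v 0 ord_max.
      rewrite /S mulr_sumr (eq_bigr _ (fun i _ => E1 i)) sumrB -mulr_sumr -mulr_suml.
      congr (_ - _ * _).
      rewrite sum_complex; apply: complex_ext => /=; first by []. 
      by rewrite big1.
    have SE : S = mu * v 0 ord_max + v 0 ord_max by rewrite E2; ring.
    rewrite SE in S1.
    have Q : (mu - alC) * (mu + 1) + complex.Complex P 0 = 0.
      apply: (mulIf gn0); rewrite mul0r.
      transitivity (mu * (mu * v 0 ord_max + v 0 ord_max) -
        (alC * (mu * v 0 ord_max + v 0 ord_max) - complex.Complex P 0 * v 0 ord_max)).
        by ring.
      by rewrite S1 subrr.
    have QR := congr1 (@complex.Re R) Q.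
    have QI := congr1 (@complex.Im R) Q.
    rewrite /= in QR QI.
    rewrite ltNge; apply/negP => p0.
    have q0 : tau * y = 0.
      have : (tau * y) * (2 * (tau * x) + 1 - al) = 0 by rewrite -QI; ring.
      move/eqP; rewrite mulf_eq0 => /orP[/eqP // | /eqP h]; lra.
    rewrite q0 in QR.
    nra.
Qed.
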